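(* For every $N\ge1$ and every $\alpha\in\mathbb{S}_m$, $w^{St}_{\mathfrak{so}(N)}(\alpha)=\sum_{s:[m]\to\{1,-1\}}\operatorname{sign}(s)\,N^{f(\alpha_s)-1}$, the sum running over all $2^m$ states $s$ of $\alpha$.
   Context: For $1\le i\le N$, $\bar i=N+1-i$, $F_{ij}=E_{ij}-E_{\bar j\bar i}$ ($E_{ij}$ matrix units), spanning $\mathfrak{so}(N)$; $w_{\mathfrak{so}(N)}(\alpha)=\sum_{i_1,\dots,i_m=1}^N F_{i_1i_{\alpha(1)}}\cdots F_{i_mi_{\alpha(m)}}\in U(\mathfrak{so}(N))$. $w^{St}_{\mathfrak{so}(N)}(\alpha)=\frac1N\operatorname{Tr}\rho(w_{\mathfrak{so}(N)}(\alpha))$, where $\rho:U(\mathfrak{so}(N))\to\mathrm{Mat}_N(\mathbb{C})$ extends the standard (matrix) representation. A state of $\alpha\in\mathbb{S}_m$ is a map $s:[m]\to\{1,-1\}$; $\operatorname{sign}(s)=(-1)^{\#s^{-1}(-1)}$. The number $f(\alpha_s)$ is defined as the number of connected components of the following graph $G$ in which every vertex has degree 2: vertices $l^-,l^+$ for $l\in[m]$; ''loop'' edges $l^+\!-\!(l+1)^-$ for $1\le l<m$ and $m^+\!-\!1^-$; and for each $l\in[m]$ an ''arrow'' edge joining the tail point of $l$ with the head point of $\alpha(l)$, where for a leg $l$ with $s(l)=1$ the head point is $l^-$ and the tail point is $l^+$, and for $s(l)=-1$ the head point is $l^+$ and the tail point is $l^-$. (This is the number of boundary components of the possibly non-orientable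 hypermap surface of $\alpha$ in which hyperedge attachments at legs of state $-1$ are half-twisted.) *)

(* Defs.v *)
From mathcomp Require Import all_boot all_order all_algebra all_fingroup.
Set Implicit Arguments. Unset Strict Implicit. Unset Printing Implicit Defensive.
Import GRing.Theory Num.Theory.
Local Open Scope ring_scope.

(* Standard representation of so(N): rho(F_ij) = E_ij - E_{jbar ibar},
   with ibar = N+1-i, i.e. rev_ord i on 0-based indices. *)
Definition rhoF (N : nat) (i j : 'I_N) : 'M[rat]_N :=
  delta_mx i j - delta_mx (rev_ord j) (rev_ord i).

(* rho(w_{so(N)}(alpha)) : the image under the (algebra morphism) rho of
   sum_{i_1..i_m} F_{i_1 i_alpha(1)} ... F_{i_m i_alpha(m)}. *)
Definition rho_w (N m : nat) (alpha : 'S_m) : 'M[rat]_N :=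
  \sum_(t : {ffun 'I_m -> 'I_N}) \prod_(l < m) rhoF (t l) (t (alpha l)).

Definition wSt (N m : nat) (alpha : 'S_m) : rat :=
  (N%:R)^-1 * \tr (rho_w N alpha).

Definition state (m : nat) := {ffun 'I_m -> bool}.
Definition state_val m (s : state m) (l : 'I_m) : int := if s l then 1 else -1.

Definition state_sign m (s : state m) : rat :=
  (-1) ^+ #|[set l | state_val s l == -1]|.

(* vertices l^- = (l, false), l^+ = (l, true) *)
Definition vtx (m : nat) := ('I_m * bool)%type.

Definition head_pt m (s : state m) (l : 'I_m) : vtx m :=
  if state_val s l == 1 then (l, false) else (l, true).
Definition tail_pt m (s : state m) (l : 'I_m) : vtx m :=
  if state_val s l == 1 then (l, true) else (l, false).

(* loop edges l^+ -- (l+1)^- (cyclically, m^+ -- 1^-) *)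
Definition loop_edge m (x y : vtx m) : bool :=
  x.2 && (y == (ordS x.1, false)).
Definition arrow_edge m (alpha : 'S_m) (s : state m) (x y : vtx m) : bool :=
  [exists l : 'I_m, (x == tail_pt s l) && (y == head_pt s (alpha l))].

Definition adjG m (alpha : 'S_m) (s : state m) : rel (vtx m) :=
  fun x y => [|| loop_edge x y, loop_edge y x,
               arrow_edge alpha s x y | arrow_edge alpha s y x].

Definition f_comp m (alpha : 'S_m) (s : state m) : nat :=
  #|[set [set y | connect (adjG alpha s) x y] | x : vtx m]|.

(* Main.v *)
Require Import Defs.
From mathcomp Require Import all_boot all_order all_algebra all_fingroup.
Import GRing.Theory Num.Theory.
Set Implicit Arguments. Unset Strict Implicit.

Lemma const_connect (V T : finType) (e : rel V) (z : V -> T) :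
  (forall x y, e x y -> z x = z y) -> forall x y, connect e x y -> z x = z y.
Proof.
move=> H x y /connectP [p]; elim: p x => [|w p IH] x /=; first by move=> _ ->.
by case/andP=> exw pw ly; rewrite (H _ _ exw); apply: IH.
Qed.

Lemma card_const (V T : finType) (e : rel V) (x0 : V) : connect_sym e ->
  #|[set z : {ffun V -> T} | [forall x, forall y, e x y ==> (z x == z y)]]| =
  (#|T| ^ #|[set [set y | connect e x y] | x : V]|)%N.
Proof.
move=> sym_e.
set P := [set [set y | connect e x y] | x : V].
pose S := {C : {set V} | C \in P}.
have clsP x : [set y | connect e x y] \in P by apply: imset_f.
pose cls x : S := exist (fun C => C \in P) _ (clsP x).
pose G (g : {ffun S -> T}) : {ffun V -> T} := [ffun v => g (cls v)].
have surjcls (C : S) : exists x, C = cls x.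
  case: C => C HC; case/imsetP: (HC) => x _ defC; exists x.
  by apply: val_inj => /=.
have Ginj : injective G.
  move=> g1 g2 eqG; apply/ffunP => C; case: (surjcls C) => x ->.
  by have := congr1 (fun h : {ffun V -> T} => h x) eqG; rewrite !ffunE.
have -> : [set z : {ffun V -> T} | [forall x, forall y, e x y ==> (z x == z y)]]
          = G @: setT.
  apply/setP => z; rewrite inE; apply/idP/idP.
  - move=> Hz.
    have Hz' x y : e x y -> z x = z y.
      by move=> exy; move/forallP: Hz => /(_ x) /forallP /(_ y) /implyP /(_ exy) /eqP.
    pose g := [ffun C : S => z (odflt x0 [pick y in val C])].
    apply/imsetP; exists g => //; apply/ffunP => v; rewrite !ffunE /=.
    case: pickP => [y /= | /= H]; last by have := H v; rewrite inE connect0.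
    by rewrite inE => /(@const_connect _ _ _ _ Hz') ->.
  - case/imsetP => g _ ->; apply/forallP => x; apply/forallP => y; apply/implyP => exy.
    rewrite !ffunE; apply/eqP; congr (g _); apply: val_inj => /=.
    apply/setP => w; rewrite !inE; apply: same_connect => //.
    exact: connect1.
rewrite card_imset // cardsT card_ffun; congr (_ ^ _)%N.
by rewrite card_sig; apply: eq_card => C; rewrite !inE.
Qed.

Section Graph.
Variables (m : nat) (alpha : 'S_m) (s : state m).

Lemma head_ptE l : head_pt s l = (l, ~~ s l).
Proof. by rewrite /head_pt /state_val; case: (s l). Qed.
Lemma tail_ptE l : tail_pt s l = (l, s l).
Proof. by rewrite /tail_pt /state_val; case: (s l). Qed.

Definition Ml (v : vtx m) : vtx m :=
  if v.2 then (ordS v.1, false) else (ord_pred v.1, true).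
Definition Ma (v : vtx m) : vtx m :=
  if v.2 == s v.1 then (alpha v.1, ~~ s (alpha v.1))
  else ((alpha^-1)%g v.1, s ((alpha^-1)%g v.1)).

Lemma MlK : involutive Ml.
Proof. by case=> i [] /=; rewrite /Ml /= ?ordSK ?ord_predK. Qed.

Lemma MaK : involutive Ma.
Proof.
case=> i b; rewrite /Ma /=.
case Hb: (b == s i) => /=.
  rewrite permK; move/eqP: Hb => ->; by case: (s _).
rewrite eqxx permKV; case: b Hb; by case: (s i).
Qed.

Lemma Ml_neq v : Ml v != v.
Proof. by case: v => i [] /=; rewrite /Ml /= xpair_eqE andbF. Qed.

Lemma Ma_neq v : Ma v != v.
Proof.
case: v => i b; rewrite /Ma /=; case Hb: (b == s i); rewrite xpair_eqE negb_and.
  case: (eqVneq (alpha i) i) => [->|//]; move/eqP: Hb => ->; by case: (s i).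
case: (eqVneq ((alpha^-1)%g i) i) => [->|//]; by case: b Hb; case: (s i).
Qed.

Lemma loopE x y : loop_edge x y || loop_edge y x = (y == Ml x).
Proof.
case: x y => i bi [j bj]; rewrite /loop_edge /Ml /=.
case: bi; case: bj => //=; rewrite ?xpair_eqE ?andbT ?andbF ?orbF //=.
by apply/eqP/eqP => [->|->]; rewrite ?ordSK ?ord_predK.
Qed.

Lemma arrowE x y : arrow_edge alpha s x y || arrow_edge alpha s y x = (y == Ma x).
Proof.
case: x y => i bi [j bj]; rewrite /arrow_edge /Ma /=.
apply/idP/idP.
- case/orP => /existsP [l]; rewrite head_ptE tail_ptE !xpair_eqE.
    by case/and3P => /andP [/eqP -> /eqP ->] /eqP -> /eqP ->; rewrite (eqxx (s l)) eqxx.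
  case/and3P => /andP [/eqP -> /eqP ->] /eqP -> /eqP ->.
  rewrite permK; case: (s (alpha l)) => /=; by rewrite eqxx.
- case Hb: (bi == s i); rewrite xpair_eqE => /andP [/eqP -> /eqP ->].
    apply/orP; left; apply/existsP; exists i; rewrite head_ptE tail_ptE.
    by move/eqP: Hb => ->; rewrite !eqxx.
  apply/orP; right; apply/existsP; exists ((alpha^-1)%g i).
  rewrite head_ptE tail_ptE permKV !eqxx /=.
  by case: bi Hb; case: (s i).
Qed.

Lemma adjGE x y : adjG alpha s x y = (y == Ml x) || (y == Ma x).
Proof.
rewrite /adjG -loopE -arrowE.
by case: (loop_edge x y); case: (loop_edge y x); case: (arrow_edge _ _ x y).
Qed.

Definition rho v := Ma (Ml v).

Lemma rho_inj : injective rho.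
Proof. exact: inj_comp (inv_inj MaK) (inv_inj MlK). Qed.

Lemma rhoMl w : rho (Ml (rho w)) = Ml w.
Proof. by rewrite /rho MlK MaK. Qed.

Lemma noiter k v : (Ml v != iter k rho v) && (Ml v != iter k.+1 rho v).
Proof.
elim: k v => [|k IH] v.
  by rewrite /= Ml_neq /rho eq_sym Ma_neq.
rewrite (andP (IH v)).2 /=; apply/eqP => H.
have H2 : Ml (rho v) = iter k rho (rho v).
  apply: rho_inj; rewrite rhoMl H -iterSr.
  by rewrite iterS.
by have := IH (rho v); rewrite H2 eqxx.
Qed.

Lemma no_orbit v : ~~ fconnect rho v (Ml v).
Proof.
apply/negP => /iter_findex H.
by have := noiter (findex rho v (Ml v)) v; rewrite H eqxx.
Qed.

Lemma rho_sym : connect_sym (frel rho).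
Proof. exact: fconnect_sym rho_inj. Qed.

Lemma froot_eq x y : fconnect rho x y -> froot rho x = froot rho y.
Proof. by move=> H; apply/eqP; rewrite root_connect //; exact: rho_sym. Qed.

Definition col v := (enum_rank (froot rho v) < enum_rank (froot rho (Ml v)))%N.

Lemma col_Ml v : col (Ml v) = ~~ col v.
Proof.
rewrite /col MlK -leqNgt [in RHS]leq_eqVlt.
have -> : (val (enum_rank (froot rho (Ml v))) == val (enum_rank (froot rho v))) = false.
  apply/negbTE; rewrite val_eqE (inj_eq enum_rank_inj) root_connect; last exact: rho_sym.
  by rewrite rho_sym no_orbit.
by [].
Qed.

Lemma col_rho v : col (rho v) = col v.
Proof.
rewrite /col (froot_eq (x := rho v) (y := v)); last by rewrite rho_sym fconnect1.
rewrite (froot_eq (x := Ml (rho v)) (y := Ml v)) //.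
by rewrite -[X in fconnect _ _ X](rhoMl v) fconnect1.
Qed.

Lemma col_Ma v : col (Ma v) = ~~ col v.
Proof. by rewrite -{1}(MlK v) -/(rho (Ml v)) col_rho col_Ml. Qed.


Variable (N : nat).

Definition aS (t : {ffun 'I_m -> 'I_N}) l := if s l then t l else rev_ord (t (alpha l)).
Definition bS (t : {ffun 'I_m -> 'I_N}) l := if s l then t (alpha l) else rev_ord (t l).
Definition cond t := [forall l, bS t l == aS t (ordS l)].
Definition yt (t : {ffun 'I_m -> 'I_N}) (v : vtx m) :=
  if v.2 == ~~ s v.1 then t v.1 else rev_ord (t (alpha v.1)).
Definition flip b (x : 'I_N) := if b then rev_ord x else x.
Definition zt t : {ffun vtx m -> 'I_N} := [ffun v => flip (col v) (yt t v)].

Lemma flipK b : involutive (flip b).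
Proof. by case: b => x //=; rewrite rev_ordK. Qed.
Lemma flipN b x : flip (~~ b) x = rev_ord (flip b x).
Proof. by case: b => /=; rewrite ?rev_ordK. Qed.

Lemma yt_false t l : yt t (l, false) = aS t l.
Proof. by rewrite /yt /aS /=; case: (s l). Qed.
Lemma yt_true t l : yt t (l, true) = rev_ord (bS t l).
Proof. by rewrite /yt /bS /=; case: (s l); rewrite ?rev_ordK. Qed.

Lemma yt_Ma t v : yt t (Ma v) = rev_ord (yt t v).
Proof.
case: v => i b; rewrite /Ma /yt /=; case Hb: (b == s i) => /=.
  by rewrite eqxx; move/eqP: Hb => ->; case: (s i) => /=; rewrite rev_ordK.
rewrite permKV; case: (s _) => /=; case: b Hb; case: (s i) => //= _; by rewrite rev_ordK.
Qed.

Lemma yt_Ml t v : cond t -> yt t (Ml v) = rev_ord (yt t v).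
Proof.
move/forallP=> H; case: v => l [] /=; rewrite /Ml /=.
  by rewrite yt_false yt_true rev_ordK; move/eqP: (H l) => ->.
by rewrite yt_false yt_true; move/eqP: (H (ord_pred l)) => ->; rewrite ord_predK.
Qed.

Lemma zt_inj : injective zt.
Proof.
move=> t1 t2 H; apply/ffunP => l.
have := congr1 (fun h : {ffun vtx m -> 'I_N} => h (l, ~~ s l)) H; rewrite !ffunE.
by move/(can_inj (flipK _)); rewrite /yt /= eqxx.
Qed.

Definition Zset := [set z : {ffun vtx m -> 'I_N} |
   [forall x, forall y, adjG alpha s x y ==> (z x == z y)]].

Lemma zt_image : zt @: [set t | cond t] = Zset.
Proof.
apply/setP => z; rewrite inE; apply/idP/idP.
- case/imsetP => t; rewrite inE => Ht ->.
  apply/forallP => x; apply/forallP => y; apply/implyP; rewrite adjGE.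
  case/orP => /eqP ->; rewrite !ffunE.
    by rewrite yt_Ml // col_Ml flipN; case: (col x) => /=; rewrite ?rev_ordK.
  by rewrite yt_Ma col_Ma flipN; case: (col x) => /=; rewrite ?rev_ordK.
- move=> Hz.
  have Hz' x y : adjG alpha s x y -> z x = z y.
    by move=> exy; move/forallP: Hz => /(_ x) /forallP /(_ y) /implyP /(_ exy) /eqP.
  have zMl v : z (Ml v) = z v by symmetry; apply: Hz'; rewrite adjGE eqxx.
  have zMa v : z (Ma v) = z v by symmetry; apply: Hz'; rewrite adjGE eqxx orbT.
  pose y v := flip (col v) (z v).
  have yMa v : y (Ma v) = rev_ord (y v) by rewrite /y zMa col_Ma flipN.
  have yMl v : y (Ml v) = rev_ord (y v) by rewrite /y zMl col_Ml flipN.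
  pose t : {ffun 'I_m -> 'I_N} := [ffun l => y (l, ~~ s l)].
  have ytE v : yt t v = y v.
    case: v => i b; rewrite /yt /= !ffunE; case: eqP => [-> //| Hb].
    have Hb' : b = s i by case: b Hb; case: (s i).
    have -> : (alpha i, ~~ s (alpha i)) = Ma (i, b) by rewrite /Ma /= Hb' eqxx.
    by rewrite yMa rev_ordK.
  apply/imsetP; exists t.
    rewrite inE; apply/forallP => l.
    have -> : bS t l = rev_ord (yt t (l, true)) by rewrite yt_true rev_ordK.
    have -> : aS t (ordS l) = yt t (Ml (l, true)) by rewrite /Ml /= yt_false.
    by rewrite !ytE yMl.
  by apply/ffunP => v; rewrite ffunE ytE /y flipK.
Qed.

Lemma card_cond (x0 : 'I_m) : #|[set t | cond t]| = (N ^ f_comp alpha s)%N.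
Proof.
rewrite -(card_imset _ zt_inj) zt_image /Zset.
rewrite (card_const _ (x0, true)) ?card_ord //.
apply: sym_connect_sym => x y; rewrite /adjG.
by case: (loop_edge x y); case: (loop_edge y x);
  case: (arrow_edge _ _ x y); case: (arrow_edge _ _ y x).
Qed.

End Graph.

Local Open Scope ring_scope.

Lemma tr_delta (N : nat) (i j : 'I_N) : \tr (delta_mx i j : 'M[rat]_N) = (i == j)%:R.
Proof.
rewrite /mxtrace (bigD1 i) //= big1 ?addr0; last first.
  by move=> k /negPf ki; by rewrite mxE ki.
by rewrite mxE eqxx /= eq_sym; case: (j == i).
Qed.

Lemma prod_delta (N n : nat) (c : nat -> rat) (a b : nat -> 'I_N) :
  \prod_(l < n.+1) (c l *: delta_mx (a l) (b l) : 'M[rat]_N) =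
  ((\prod_(l < n.+1) c l) * \prod_(l < n) ((b l == a l.+1)%:R)) *: delta_mx (a 0%N) (b n).
Proof.
elim: n => [|n IH].
  by rewrite !big_ord1 big_ord0 mulr1.
rewrite big_ord_recr IH /= -mulmxE -scalemxAl -scalemxAr mul_delta_mx_cond.
rewrite scalerA -scaler_nat scalerA; congr (_ *: _).
rewrite [X in _ = X * _]big_ord_recr [X in _ = _ * X]big_ord_recr /=.
by rewrite mulrACA !mulrA.
Qed.


Definition cs m (s : state m) (l : 'I_m) : rat := if s l then 1 else -1.

Lemma rhoF_split N m (alpha : 'S_m) (t : {ffun 'I_m -> 'I_N}) :
  \prod_(l < m) rhoF (t l) (t (alpha l)) =
  \sum_(s : state m) \prod_(l < m) (cs s l *: delta_mx (aS alpha s t l) (bS alpha s t l)).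
Proof.
rewrite (eq_bigr (fun l => \sum_(b : bool)
   ((if b then 1 else -1) *: delta_mx (if b then t l else rev_ord (t (alpha l)))
       (if b then t (alpha l) else rev_ord (t l)) : 'M[rat]_N))); last first.
  by move=> l _; rewrite big_bool /= scale1r scaleN1r.
rewrite bigA_distr_bigA; apply: eq_bigr => s _; apply: eq_bigr => l _.
by rewrite /cs /aS /bS; case: (s l).
Qed.

Lemma sign_prod m (s : state m) : \prod_(l < m) cs s l = state_sign s.
Proof.
rewrite /state_sign -prodr_const (bigID (fun l => s l)) /= big1; last first.
  by move=> l; rewrite /cs => ->.
rewrite mul1r; apply: eq_big => l; last by rewrite /cs => /negbTE ->.
by rewrite !inE /state_val; case: (s l).
Qed.

Lemma cond_prod n (P : 'I_n.+1 -> bool) :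
  \prod_(l < n.+1) (P l)%:R = ([forall l, P l]%:R : rat).
Proof.
case: forallP => [H | /forallP]; first by rewrite big1 // => l _; rewrite H.
rewrite negb_forall => /existsP [l /negbTE Hl].
by rewrite (bigD1 l) //= Hl mul0r.
Qed.

Lemma tr_term N n (alpha : 'S_n.+1) (s : state n.+1) (t : {ffun 'I_n.+1 -> 'I_N}) :
  \tr (\prod_(l < n.+1) (cs s l *: delta_mx (aS alpha s t l) (bS alpha s t l)) : 'M[rat]_N)
  = state_sign s * (cond alpha s t)%:R.
Proof.
pose c k := cs s (inord k); pose a k := aS alpha s t (inord k); pose b k := bS alpha s t (inord k).
rewrite (eq_bigr (fun l : 'I_n.+1 => c l *: delta_mx (a l) (b l))); last first.
  by move=> l _; rewrite /c /a /b inord_val.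
rewrite prod_delta mxtraceZ tr_delta -mulrA.
have -> : \prod_(l < n.+1) c l = state_sign s.
  by rewrite -sign_prod; apply: eq_bigr => l _; rewrite /c inord_val.
congr (_ * _); rewrite /cond -cond_prod big_ord_recr /=; congr (_ * _).
  apply: eq_bigr => l _; rewrite /a /b.
  congr ((bS alpha s t _ == aS alpha s t _)%:R); apply: val_inj; rewrite /= inordK //.
  - by rewrite ltnS; apply: ltnW.
  - by rewrite modn_small // ltnS.
  - by rewrite ltnS.
rewrite eq_sym /a /b.
congr ((bS alpha s t _ == aS alpha s t _)%:R); apply: val_inj; rewrite /= inordK //.
by rewrite modnn.
Qed.

Theorem theorem12 (N m : nat) (alpha : 'S_m) :
  (0 < N)%N -> (0 < m)%N ->
  wSt N alpha =
  \sum_(s : state m) state_sign s * (N%:R : rat) ^ ((f_comp alpha s)%:Z - 1).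
Proof.
case: m alpha => // n alpha N0 _.
rewrite /wSt /rho_w (eq_bigr _ (fun t _ => rhoF_split alpha t)) raddf_sum.
rewrite (eq_bigr (fun t => \sum_(s : state n.+1) state_sign s * (cond alpha s t)%:R)); last first.
  move=> t _; rewrite raddf_sum; apply: eq_bigr => s _; exact: tr_term.
rewrite exchange_big mulr_sumr; apply: eq_bigr => s _.
rewrite -mulr_sumr.
have -> : \sum_(t : {ffun 'I_n.+1 -> 'I_N}) (cond alpha s t)%:R = (N ^ f_comp alpha s)%N%:R :> rat.
  rewrite -(card_cond alpha s N ord0) -sum1_card natr_sum [RHS]big_mkcond.
  by apply: eq_bigr => t _; rewrite inE; case: (cond _ _ _).
rewrite mulrCA natrX; congr (_ * _).
have N0' : (N%:R : rat) != 0 by rewrite pnatr_eq0 -lt0n.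
by rewrite expfzDr // exprN1 mulrC.
Qed.
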